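(* For every integer $n\ge1$, $M^L(n+2)\le 4K(n)$.
   Context: $\mathbb{F}=\{0,1\}$. The binary $n$-dimensional hypercube $\mathbb{F}^n$ is the graph on $\mathbb{F}^n$ where two words are adjacent iff their Hamming distance is $1$. For a nonempty $C\subseteq\mathbb{F}^n$, $I(\mathbf{x})=N[\mathbf{x}]\cap C$ with $N[\mathbf{x}]$ the words at Hamming distance $\le1$ from $\mathbf{x}$. $C$ is a covering code if $I(\mathbf{x})\ne\emptyset$ for all $\mathbf{x}\in\mathbb{F}^n$; $C$ is a local identifying code if it is covering and $I(\mathbf{x})\ne I(\mathbf{y})$ for all adjacent $\mathbf{x},\mathbf{y}$. $K(n)$ is the minimum cardinality of a covering code in $\mathbb{F}^n$, and $M^L(n)$ the minimum cardinality of a local identifying code in $\mathbb{F}^n$. *)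

(* Defs.v *)
From mathcomp Require Import all_boot.
Set Implicit Arguments. Unset Strict Implicit. Unset Printing Implicit Defensive.

(* Binary words of length n : the vertex set of the hypercube F^n. *)
Definition word (n : nat) : finType := {ffun 'I_n -> bool}.

Definition hdist n (x y : word n) : nat := #|[set i | x i != y i]|.

Definition cnbhd n (x : word n) : {set word n} := [set y | hdist x y <= 1].

Definition Iset n (C : {set word n}) (x : word n) : {set word n} := cnbhd x :&: C.

Definition covering_code n (C : {set word n}) : bool :=
  (C != set0) && [forall x : word n, Iset C x != set0].

Definition local_identifying_code n (C : {set word n}) : bool :=
  covering_code C &&
  [forall x : word n, forall y : word n, (hdist x y == 1) ==> (Iset C x != Iset C y)].

Lemma setT_covering n : covering_code [set: word n].
Proof.
apply/andP; split.
  by apply/set0Pn; exists [ffun => false]; rewrite inE.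
apply/forallP=> x; apply/set0Pn; exists x.
rewrite !inE andbT /hdist.
suff -> : [set i | x i != x i] = set0 by rewrite cards0.
by apply/setP=> i; rewrite !inE eqxx.
Qed.

Lemma K_exists n :
  exists k, [exists C : {set word n}, covering_code C && (#|C| == k)].
Proof.
exists #|[set: word n]|; apply/existsP; exists [set: word n].
by rewrite setT_covering eqxx.
Qed.

Definition K (n : nat) : nat := ex_minn (K_exists n).

(* Main.v *)
Require Import Defs.
From mathcomp Require Import all_boot zify.
Set Implicit Arguments. Unset Strict Implicit. Unset Printing Implicit Defensive.

Definition flip m (x : word m) (i : 'I_m) : word m :=
  [ffun k => if k == i then ~~ x k else x k].

Lemma hdistC m (x y : word m) : hdist x y = hdist y x.
Proof. by rewrite /hdist; apply: eq_card => k; rewrite !inE eq_sym. Qed.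

Lemma hdist_flip m (x : word m) i : hdist x (flip x i) = 1.
Proof.
rewrite /hdist -(cards1 i); apply: eq_card => k; rewrite !inE ffunE.
by case: (k == i); case: (x k).
Qed.

Lemma flipK m (x : word m) i : flip (flip x i) i = x.
Proof. by apply/ffunP=> k; rewrite !ffunE; case: eqP => // _; rewrite negbK. Qed.

Lemma hdist1_flip m (x y : word m) : hdist x y = 1 -> exists i, y = flip x i.
Proof.
rewrite /hdist => /eqP/cards1P [i Hi]; exists i; apply/ffunP=> k; rewrite ffunE.
move/setP: Hi => /(_ k); rewrite !inE.
by case: (k == i); case: (x k); case: (y k).
Qed.

Lemma hdist0 m (x y : word m) : hdist x y = 0 -> x = y.
Proof.
rewrite /hdist => /eqP; rewrite cards_eq0 => /eqP Hs; apply/ffunP=> k.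
move/setP: Hs => /(_ k); rewrite !inE.
by move=> /negbFE/eqP.
Qed.

Lemma hdist2 m (x y : word m) i j : x i != y i -> x j != y j -> i != j ->
  1 < hdist x y.
Proof.
move=> Hi Hj Hij; have E := cards2 i j; rewrite Hij in E; rewrite /hdist -E.
by apply: subset_leq_card; apply/subsetP=> k; rewrite !inE => /orP[]/eqP->.
Qed.

Section Main.
Variable n : nat.
Variable C : {set word n}.
Hypothesis cov : covering_code C.

Definition proj (x : word (n + 2)) : word n := [ffun k => x (lshift 2 k)].
Definition suf (x : word (n + 2)) : word 2 := [ffun k => x (rshift n k)].

Definition D : {set word (n + 2)} := [set x | proj x \in C].

Lemma near u : exists c, c \in C /\ hdist u c <= 1.
Proof.
case/andP: cov => _ /forallP /(_ u) /set0Pn [c]; rewrite !inE => /andP[h1 h2].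
by exists c.
Qed.

Lemma near2 u : u \in C \/ exists k, flip u k \in C.
Proof.
have [c [Hc]] := near u; rewrite leq_eqVlt ltnS leqn0 => /orP[/eqP|/eqP] H.
  by have [k E] := hdist1_flip H; right; exists k; rewrite -E.
by left; rewrite (hdist0 H).
Qed.

Lemma proj_flipl x k : proj (flip x (lshift 2 k)) = flip (proj x) k.
Proof.
apply/ffunP=> j; rewrite !ffunE.
have -> : (lshift 2 j == lshift 2 k) = (j == k).
  by apply/eqP/eqP=> [/lshift_inj|->].
by [].
Qed.

Lemma proj_flipr x j : proj (flip x (rshift n j)) = proj x.
Proof.
apply/ffunP=> k; rewrite !ffunE.
case: eqP => // /(congr1 val) /=; move: (ltn_ord k); lia.
Qed.

Lemma inI x w : (w \in Iset D x) = (hdist x w <= 1) && (w \in D).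
Proof. by rewrite /Iset !inE. Qed.

Definition t1 : 'I_(n + 2) := rshift n (@ord0 1).
Definition t2 : 'I_(n + 2) := rshift n (@ord_max 1).

Lemma Lp x i : proj x \in C -> Iset D x != Iset D (flip x i).
Proof.
move=> Hx.
pose j := if i == t1 then t2 else t1.
have Hj : j != i.
  rewrite /j; have [->|ne] := eqVneq i t1; last by rewrite eq_sym.
  by apply/eqP => /(congr1 val) /=; rewrite /t1 /t2 /=; lia.
have HjD : flip x j \in D.
  by rewrite inE /j; case: (i == t1); rewrite proj_flipr.
apply/negP => /eqP E.
have : flip x j \in Iset D x by rewrite inI hdist_flip HjD.
rewrite E inI HjD andbT.
have Hij : i != j by rewrite eq_sym.
have H1 : 1 < hdist (flip x i) (flip x j).
  apply: (hdist2 (i := i) (j := j)) => //;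
    rewrite /flip !ffunE ?eqxx ?(negbTE Hj) ?(negbTE Hij); by case: (x _).
by move=> H2; move: (leq_trans H1 H2).
Qed.

Lemma Lq x i : proj x \notin C -> proj (flip x i) \notin C ->
  Iset D x != Iset D (flip x i).
Proof.
move=> Hx Hy.
case: (near2 (proj x)) => [H|[k Hk]]; first by rewrite H in Hx.
have HzD : flip x (lshift 2 k) \in D by rewrite inE proj_flipl.
have Hki : lshift 2 k != i.
  by apply/eqP=> E; move: Hy; rewrite -E proj_flipl Hk.
apply/negP => /eqP E.
have : flip x (lshift 2 k) \in Iset D x by rewrite inI hdist_flip HzD.
rewrite E inI HzD andbT.
have Hik : i != lshift 2 k by rewrite eq_sym.
have H1 : 1 < hdist (flip x i) (flip x (lshift 2 k)).
  apply: (hdist2 (i := i) (j := lshift 2 k)) => //;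
    rewrite /flip !ffunE ?eqxx ?(negbTE Hki) ?(negbTE Hik); by case: (x _).
by move=> H2; move: (leq_trans H1 H2).
Qed.

Lemma D_lic : local_identifying_code D.
Proof.
have covD : forall x, Iset D x != set0.
  move=> x; apply/set0Pn.
  case: (near2 (proj x)) => [H|[k Hk]].
    exists x; rewrite inI inE H andbT.
    by rewrite /hdist leq_eqVlt ltnS leqn0 cards_eq0; apply/orP; right;
       apply/eqP/setP=> k; rewrite !inE eqxx.
  by exists (flip x (lshift 2 k)); rewrite inI hdist_flip inE proj_flipl Hk.
apply/andP; split.
  apply/andP; split; last by apply/forallP.
  have [w /setIP[_ Hw]] := set0Pn _ (covD [ffun => false]).
  by apply/set0Pn; exists w.
apply/forallP=> x; apply/forallP=> y; apply/implyP=> /eqP /hdist1_flip [i ->].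
case Hx: (proj x \in C); first exact: Lp.
case Hy: (proj (flip x i) \in C).
  by rewrite eq_sym -{2}(flipK x i); apply: Lp.
by apply: Lq; rewrite ?Hx ?Hy.
Qed.

Lemma D_card : #|D| <= 4 * #|C|.
Proof.
pose f x := (proj x, suf x).
have finj : injective f.
  move=> x y [E1 E2]; apply/ffunP=> k; rewrite -(splitK k).
  case: (split k) => j /=.
    by move/ffunP: E1 => /(_ j); rewrite !ffunE.
  by move/ffunP: E2 => /(_ j); rewrite !ffunE.
rewrite -(card_imset _ finj).
have : f @: D \subset setX C [set: word 2].
  by apply/subsetP=> z /imsetP[x]; rewrite inE => Hx ->; rewrite !inE Hx.
move/subset_leq_card; rewrite cardsX cardsT card_ffun card_bool card_ord mulnC.
by [].
Qed.

End Main.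

Theorem mainTheorem8 (n : nat) (hn : 1 <= n) :
  exists C : {set word (n + 2)}, local_identifying_code C /\ #|C| <= 4 * K n.
Proof.
rewrite /K; case: ex_minnP => m /existsP [C /andP[cov /eqP cardC]] _.
exists (D C); split; first exact: D_lic.
by rewrite -cardC D_card.
Qed.
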